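(* Let $A\in\mathbb{R}^{m\times N}$ satisfy the robust binary null space property with constants $0<\rho<1$ and $\tau>0$ relative to a set $K\subseteq[N]$. Let $b=A\mathbb{1}_K+e$ with $e\in\mathbb{R}^m$, $\|e\|_2\le\eta$. Then every solution $\hat z$ of $$\min\|z\|_1\quad\text{subject to}\quad \|Az-b\|_2\le\eta\ \text{ and }\ z\in[0,1]^N$$ satisfies $\|\hat z-\mathbb{1}_K\|_1\le\frac{4\tau}{1-\rho}\eta$.
   Context: $K^C=[N]\setminus K$; $\mathbb{1}_K$ has entries $1$ on $K$, $0$ elsewhere. $H_K=\{w\in\mathbb{R}^N: w_i\le 0 \text{ for } i\in K,\ w_i\ge 0\text{ for } i\in K^C\}$. $A$ satisfies the robust binary null space property with constants $\rho,\tau$ relative to $K$ if $-\sum_{i\in K}v_i\le\rho\sum_{i\in K^C}v_i+\tau\|Av\|_2$ for every $v\in H_K$. *)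

(* Defs.v *)
From HB Require Import structures.
From mathcomp Require Import all_boot all_order all_algebra.
From mathcomp Require Import reals.
Set Implicit Arguments. Unset Strict Implicit. Unset Printing Implicit Defensive.
Import Order.TTheory GRing.Theory Num.Theory.
Local Open Scope ring_scope.

Definition norm1 {R : realType} {n : nat} (v : 'cV[R]_n) : R :=
  \sum_(i < n) `|v i 0|.
Definition norm2 {R : realType} {n : nat} (v : 'cV[R]_n) : R :=
  Num.sqrt (\sum_(i < n) (v i 0) ^+ 2).

Definition indic {R : realType} {N : nat} (K : {set 'I_N}) : 'cV[R]_N :=
  \col_(i < N) (if i \in K then 1 else 0).

Definition in_HK {R : realType} {N : nat} (K : {set 'I_N}) (w : 'cV[R]_N) : Prop :=
  forall i : 'I_N, if i \in K then w i 0 <= 0 else 0 <= w i 0.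

Definition robust_binary_NSP {R : realType} {m N : nat} (A : 'M[R]_(m, N))
  (rho tau : R) (K : {set 'I_N}) : Prop :=
  forall v : 'cV[R]_N, in_HK K v ->
    - (\sum_(i in K) v i 0) <= rho * (\sum_(i in ~: K) v i 0) + tau * norm2 (A *m v).

Definition feasible {R : realType} {m N : nat} (A : 'M[R]_(m, N)) (b : 'cV[R]_m)
  (eta : R) (z : 'cV[R]_N) : Prop :=
  norm2 (A *m z - b) <= eta /\ (forall i : 'I_N, 0 <= z i 0 <= 1).

Definition is_solution {R : realType} {m N : nat} (A : 'M[R]_(m, N)) (b : 'cV[R]_m)
  (eta : R) (zh : 'cV[R]_N) : Prop :=
  feasible A b eta zh /\ forall z, feasible A b eta z -> norm1 zh <= norm1 z.

(* Main.v *)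
Require Import Defs.
From HB Require Import structures.
From mathcomp Require Import all_boot all_order all_algebra.
From mathcomp Require Import reals.
From mathcomp Require Import ring lra.
Import Order.TTheory GRing.Theory Num.Theory.
Local Open Scope ring_scope.

Lemma sum_sq0 (R : realType) n (a : 'I_n -> R) :
  \sum_i a i ^+ 2 <= 0 -> forall i, a i = 0.
Proof.
move=> H i.
have H0 : \sum_i a i ^+ 2 == 0.
  by rewrite eq_le H /=; apply: sumr_ge0 => j _; exact: sqr_ge0.
rewrite psumr_eq0 in H0; last by move=> j _; exact: sqr_ge0.
have := allP H0 i (mem_index_enum i).
by rewrite /= sqrf_eq0 => /eqP.
Qed.

Lemma cs (R : realType) n (a b : 'I_n -> R) :
  \sum_i a i * b i <= Num.sqrt (\sum_i a i ^+ 2) * Num.sqrt (\sum_i b i ^+ 2).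
Proof.
set A := \sum_i a i ^+ 2; set B := \sum_i b i ^+ 2.
have A0 : 0 <= A by apply: sumr_ge0 => j _; exact: sqr_ge0.
have B0 : 0 <= B by apply: sumr_ge0 => j _; exact: sqr_ge0.
case: (boolP (Num.sqrt A == 0)) => [|sA].
  rewrite sqrtr_eq0 => /sum_sq0 Ha.
  rewrite big1; first by rewrite mulr_ge0 ?sqrtr_ge0.
  by move=> i _; rewrite Ha mul0r.
case: (boolP (Num.sqrt B == 0)) => [|sB].
  rewrite sqrtr_eq0 => /sum_sq0 Hb.
  rewrite big1; first by rewrite mulr_ge0 ?sqrtr_ge0.
  by move=> i _; rewrite Hb mulr0.
set s := Num.sqrt A; set t := Num.sqrt B.
have s0 : 0 < s by rewrite lt_neqAle eq_sym sA sqrtr_ge0.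
have t0 : 0 < t by rewrite lt_neqAle eq_sym sB sqrtr_ge0.
have As : A = s ^+ 2 by rewrite sqr_sqrtr.
have Bt : B = t ^+ 2 by rewrite sqr_sqrtr.
have key : \sum_i (2 * (a i * b i) * (s * t)) <= \sum_i (a i ^+ 2 * t ^+ 2 + b i ^+ 2 * s ^+ 2).
  apply: ler_sum => i _.
  have := sqr_ge0 (a i * t - b i * s); nra.
rewrite big_split /= -!mulr_suml -mulr_sumr -/A -/B As Bt in key.
set X := \sum_i a i * b i in key *.
have st0 : 0 < s * t by apply: mulr_gt0.
nra.
Qed.

Lemma norm2_ge0 (R : realType) n (u : 'cV[R]_n) : 0 <= norm2 u.
Proof. exact: sqrtr_ge0. Qed.

Lemma norm2_tri (R : realType) n (u w : 'cV[R]_n) :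
  norm2 (u + w) <= norm2 u + norm2 w.
Proof.
have h0 : 0 <= norm2 u + norm2 w by apply: addr_ge0; apply: norm2_ge0.
rewrite /norm2 -[X in _ <= X]ger0_norm // -sqrtr_sqr ler_sqrt; last exact: sqr_ge0.
have -> : \sum_(i < n) (u + w) i 0 ^+ 2 =
   \sum_(i < n) u i 0 ^+ 2 + 2 * \sum_(i < n) (u i 0 * w i 0) + \sum_(i < n) w i 0 ^+ 2.
  rewrite mulr_sumr -!big_split /=; apply: eq_bigr => i _; rewrite mxE; ring.
have := cs _ _ (fun i => u i 0) (fun i => w i 0).
rewrite sqrrD !sqr_sqrtr; first lra.
  by apply: sumr_ge0 => j _; exact: sqr_ge0.
by apply: sumr_ge0 => j _; exact: sqr_ge0.
Qed.

Lemma norm2N (R : realType) n (u : 'cV[R]_n) : norm2 (- u) = norm2 u.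
Proof. by rewrite /norm2; congr Num.sqrt; apply: eq_bigr => i _; rewrite mxE sqrrN. Qed.

Theorem theorem2p13 (R : realType) (m N : nat) (A : 'M[R]_(m, N))
  (rho tau eta : R) (K : {set 'I_N}) (e : 'cV[R]_m) (zh : 'cV[R]_N) :
  0 < rho -> rho < 1 -> 0 < tau ->
  robust_binary_NSP A rho tau K ->
  norm2 e <= eta ->
  is_solution A (A *m indic K + e) eta zh ->
  norm1 (zh - indic K) <= (4 * tau / (1 - rho)) * eta.
Proof.
move=> rho0 rho1 tau0 NSP He [[Hf Hb] Hmin].
set v := zh - indic K.
have vE : forall i, v i 0 = zh i 0 - (if i \in K then 1 else 0).
  by move=> i; rewrite !mxE.
have HK : in_HK K v.
  move=> i; rewrite vE; have := Hb i; case: (i \in K) => /andP [h1 h2]; lra.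
have Av : norm2 (A *m v) <= eta + eta.
  have -> : A *m v = (A *m zh - (A *m indic K + e)) + e.
    by rewrite /v mulmxBr opprD addrA subrK.
  by apply: le_trans (norm2_tri _ _ _ _) _; apply: lerD.
have Hn := NSP v HK.
set SK := \sum_(i in K) v i 0 in Hn; set SC := \sum_(i in ~: K) v i 0 in Hn.
have split1 : forall F : 'I_N -> R, \sum_i F i = \sum_(i in K) F i + \sum_(i in ~: K) F i.
  move=> F; rewrite (bigID (fun i => i \in K)) /=; congr (_ + _).
  by apply: eq_bigl => i; rewrite in_setC.
have n1v : norm1 v = - SK + SC.
  rewrite /norm1 split1 /SK /SC -sumrN; congr (_ + _); apply: eq_bigr => i Hi.
    have := HK i; rewrite Hi => h; by rewrite ler0_norm.
  have := HK i; move: Hi; rewrite in_setC => /negbTE -> h; by rewrite ger0_norm.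
have n1z : norm1 zh = (\sum_(i in K) (1 : R)) + SK + SC.
  rewrite /norm1 split1 /SK /SC -big_split /=; congr (_ + _); apply: eq_bigr => i Hi.
    rewrite vE Hi ger0_norm; [ring | by case/andP: (Hb i)].
  move: Hi; rewrite in_setC => /negbTE Hi.
  by rewrite vE Hi subr0 ger0_norm //; case/andP: (Hb i).
have n1K : norm1 (indic K : 'cV[R]_N) = \sum_(i in K) (1 : R).
  rewrite /norm1 split1 [X in _ + X]big1 ?addr0.
    by apply: eq_bigr => i Hi; rewrite mxE Hi normr1.
  by move=> i; rewrite in_setC => /negbTE Hi; rewrite mxE Hi normr0.
have feasK : feasible A (A *m indic K + e) eta (indic K).
  split; last by move=> i; rewrite mxE; case: (i \in K); rewrite /= ?ler01 ?lexx.
  by rewrite opprD addrA subrr add0r norm2N.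
have Hm := Hmin _ feasK.
rewrite n1z n1K in Hm.
rewrite n1v.
have h1 : - SK <= rho * SC + tau * (eta + eta).
  apply: le_trans Hn _; apply: lerD => //; apply: ler_wpM2l => //; lra.
have h2 : (- SK + SC) * (1 - rho) <= 4 * tau * eta by nra.
rewrite mulrAC ler_pdivlMr; last lra.
lra.
Qed.
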